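(* Let $n\ge1$, let $b_1,\dots,b_n\ge2$ be integers and $\varepsilon_1,\dots,\varepsilon_n\in\{+1,-1\}$, and let $x=[\langle b_j:\varepsilon_j\rangle_{j=1}^n]$. Then for every $z\in\mathcal{F}_n(x)$ and every $k$ with $0\le k\le n-1$, \[\frac45\cdot\frac1{b_{k+1}}\le|G^{\circ k}(z)|\le\frac43\cdot\frac1{b_{k+1}},\] and $\arg G^{\circ k}(z)\in[-\pi/4,\pi/4]$ if $\operatorname{Re}G^{\circ k}(z)>0$, while $\arg G^{\circ k}(z)\in[3\pi/4,5\pi/4]$ if $\operatorname{Re}G^{\circ k}(z)<0$.
   Context: For $x\in\mathbb{R}$, $[x]$ denotes the closest integer to $x$ with the convention $x\in([x]-1/2,[x]+1/2]$ for $x>0$, $x\in[[x]-1/2,[x]+1/2)$ for $x<0$, and $[0]=0$. Define $G(z)=-1/z-[\operatorname{Re}(-1/z)]$ for $z\in\mathbb{C}\setminus\{0\}$. For integers $b_j\ge2$ and signs $\varepsilon_j$, $[\langle b_j:\varepsilon_j\rangle_{j=1}^n]=\cfrac{\varepsilon_1}{b_1+\cfrac{\varepsilon_2}{\ddots+\cfrac{\varepsilon_n}{b_n}}}$. For an integer $b\ge2$ and $s\in\{\pm1\}$ let $D(s/b)=\{-1/w: w\in B(-sb,1/2)\}$, the open round disk (symmetric about $\mathbb{R}$) containing $s/b$, on which $G$ is a holomorphic bijection onto $B(0,1/2)$. For $x=[\langle b_j:\varepsilon_j\rangle_{j=1}^n]$ let $s_k\in\{\pm1\}$ be the sign of the real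 number $G^{\circ(k-1)}(x)$, $1\le k\le n$, and let $\mathcal{F}_n(x)$ be the set of $z$ such that for every $0\le k\le n-1$, $G^{\circ k}(z)$ is defined and lies in $D(s_{k+1}/b_{k+1})$ (the round disk of $\mathcal{F}_n$ about $x$ on which $G^{\circ n}$ maps into $B(0,1/2)$). *)

(* Defs.v *)
From Stdlib Require Import Reals.
From Coquelicot Require Import Coquelicot.
Open Scope R_scope.

(* Nearest integer [x]:  x>0: x in ([x]-1/2,[x]+1/2], i.e. [x] = ceil(x-1/2);
   x<0: x in [[x]-1/2,[x]+1/2), i.e. [x] = floor(x+1/2);  [0] = 0.
   Stdlib: up r = the least integer > r, so floor r = up r - 1 and
   ceil r = 1 - up (-r). *)
Definition nint (x : R) : Z :=
  if Rlt_dec 0 x then (1 - up (/2 - x))%Z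
  else if Rlt_dec x 0 then (up (x + /2) - 1)%Z
  else 0%Z.

(* G(z) = -1/z - [Re(-1/z)]  (only meaningful for z <> 0). *)
Definition G (z : C) : C :=
  Cminus (Copp (Cinv z)) (RtoC (IZR (nint (Re (Copp (Cinv z)))))).

Fixpoint Giter (k : nat) (z : C) : C :=
  match k with O => z | S k' => G (Giter k' z) end.

Definition Gdefined (k : nat) (z : C) : Prop :=
  forall j, (j < k)%nat -> Giter j z <> RtoC 0.

(* [<b_j : eps_j>_{j=m}^{m+len-1}] ; the paper's x is cfrac b eps 1 n. *)
Fixpoint cfrac_from (b : nat -> nat) (eps : nat -> R) (m len : nat) : R :=
  match len with
  | O => 0
  | S len' => eps m / (INR (b m) + cfrac_from b eps (S m) len')
  end.

Definition cfrac (b : nat -> nat) (eps : nat -> R) (n : nat) : R :=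
  cfrac_from b eps 1 n.

(* sign of a real number, valued in {1,-1} (it is only applied to
   nonzero reals in the statement). *)
Definition rsign (r : R) : R := if Rlt_dec 0 r then 1 else -1.

(* D(s/b) = { -1/w : w in B(-s b, 1/2) } *)
Definition inD (s : R) (b : nat) (z : C) : Prop :=
  exists w : C, Cmod (Cminus w (RtoC (- s * INR b))) < /2 /\ z = Copp (Cinv w).

Definition in_Fn (b : nat -> nat) (eps : nat -> R) (n : nat) (z : C) : Prop :=
  let x := cfrac b eps n in
  forall k, (k <= n - 1)%nat ->
    Gdefined k z /\
    inD (rsign (Re (Giter k (RtoC x)))) (b (S k)) (Giter k z).

Definition arg_in (w : C) (a c : R) : Prop :=
  exists t, a <= t <= c /\ w = (Cmod w * cos t, Cmod w * sin t).

(* Main.v *)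
Require Import Defs.
From Stdlib Require Import Reals Lra Lia.
From Coquelicot Require Import Coquelicot.
Open Scope R_scope.
Lemma atan_in (y : R) : Rabs y <= 1 -> - PI/4 <= atan y <= PI/4.
Proof.
  intros H. pose proof atan_1.
  assert (atan (-1) = - atan 1) by (rewrite <- atan_opp; f_equal; lra).
  assert (-1 <= y <= 1) by (apply Rabs_le_between; auto).
  split.
  - destruct (Req_dec y (-1)). subst; lra.
    assert (atan (-1) < atan y) by (apply atan_increasing; lra). lra.
  - destruct (Req_dec y 1). subst; lra.
    assert (atan y < atan 1) by (apply atan_increasing; lra). lra.
Qed.

Lemma polar_id (p q : R) : p <> 0 ->
  sqrt (p^2 + q^2) = Rabs p * sqrt (1 + (q/p)²).
Proof.
  intros Hp. rewrite <- sqrt_Rsqr_abs.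
  rewrite <- sqrt_mult_alt by apply Rle_0_sqr.
  f_equal. unfold Rsqr. field. auto.
Qed.

Lemma arg_pos (p q : R) : 0 < p -> Rabs q <= p -> arg_in (p, q) (- PI/4) (PI/4).
Proof.
  intros Hp Hq. exists (atan (q/p)). split.
  - apply atan_in. unfold Rdiv. rewrite Rabs_mult, Rabs_inv, (Rabs_pos_eq p) by lra.
    apply (Rmult_le_reg_r p); [lra|]. field_simplify; lra.
  - unfold Cmod; simpl fst; simpl snd. rewrite polar_id by lra.
    rewrite cos_atan, sin_atan, Rabs_pos_eq by lra.
    assert (0 < sqrt (1 + (q/p)²)) by (apply sqrt_lt_R0; pose proof (Rle_0_sqr (q/p)); lra).
    f_equal; field; lra.
Qed.

Lemma arg_neg (p q : R) : p < 0 -> Rabs q <= - p -> arg_in (p, q) (3*PI/4) (5*PI/4).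
Proof.
  intros Hp Hq. exists (atan (q/p) + PI). split.
  - assert (Rabs (q/p) <= 1).
    { unfold Rdiv. rewrite Rabs_mult, Rabs_inv, (Rabs_left p) by lra.
      apply (Rmult_le_reg_r (-p)); [lra|]. field_simplify; lra. }
    apply atan_in in H. lra.
  - unfold Cmod; simpl fst; simpl snd. rewrite polar_id by lra.
    rewrite neg_cos, neg_sin, cos_atan, sin_atan, Rabs_left by lra.
    assert (0 < sqrt (1 + (q/p)²)) by (apply sqrt_lt_R0; pose proof (Rle_0_sqr (q/p)); lra).
    f_equal; field; lra.
Qed.
Lemma key (s : R) (bn : nat) (z : C) : (s = 1 \/ s = -1) -> (2 <= bn)%nat -> inD s bn z ->
    4/5 * / INR bn <= Cmod z <= 4/3 * / INR bn /\
    (0 < Re z -> arg_in z (- PI / 4) (PI / 4)) /\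
    (Re z < 0 -> arg_in z (3 * PI / 4) (5 * PI / 4)).
Proof.
  intros Hs Hb [[a c] [Hw Hz]].
  assert (HB : 2 <= INR bn) by (apply le_INR in Hb; simpl in Hb; lra).
  set (B := INR bn) in *.
  assert (Hw2 : sqrt ((a + - (- s * B)) ^ 2 + (c + - 0) ^ 2) < /2) by exact Hw. clear Hw. rename Hw2 into Hw.
  set (M := (a + - (- s * B)) ^ 2 + (c + - 0) ^ 2) in Hw.
  assert (HM : M < /4).
  { assert (0 <= M) by (unfold M; pose proof (pow2_ge_0 (a + - (- s * B))); pose proof (pow2_ge_0 (c + - 0)); lra).
    pose proof (sqrt_sqrt M H). pose proof (sqrt_pos M). nra. }
  unfold M in HM.
  replace (c + - 0) with c in HM by ring.
  replace (a + - (- s * B)) with (a + s*B) in HM by ring.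
  simpl in HM.
  pose proof (Rle_0_sqr c). pose proof (Rle_0_sqr (a+s*B)). unfold Rsqr in *.
  assert (Hc : c*c < /4) by lra.
  assert (Ha : (a + s*B)*(a+s*B) < /4) by lra.
  assert (Ha2 : (B - /2) * (B - /2) < a*a).
  { destruct Hs; subst s; nra. }
  set (N := a^2 + c^2).
  assert (HN1 : (B - /2)^2 < N) by (unfold N; nra).
  assert (HN2 : N < (B + /2)^2) by (unfold N; destruct Hs; subst s; nra).
  assert (HNp : 0 < N) by nra.
  assert (Hzz : z = (- a / N, c / N)).
  { subst z. unfold Copp, Cinv. cbn [fst snd]. fold N. f_equal; field; lra. }
  split.
  - assert (Hwne : (a, c) <> RtoC 0).
    { intro E. injection E; intros; subst. nra. }
    rewrite Hz, Cmod_opp, Cmod_inv by auto.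
    unfold Cmod; cbn [fst snd]. fold N.
    pose proof (sqrt_sqrt N (Rlt_le _ _ HNp)). pose proof (sqrt_pos N).
    set (r := sqrt N) in *.
    assert (r < B + /2) by nra.
    assert (B - /2 < r) by nra.
    split.
    + replace (4/5 * / B) with (/ (5/4 * B)) by (field; lra).
      apply Rinv_le_contravar; lra.
    + replace (4/3 * / B) with (/ (3/4 * B)) by (field; lra).
      apply Rinv_le_contravar; lra.
  - rewrite Hzz. simpl.
    assert (HiN : 0 < / N) by (apply Rinv_0_lt_compat; lra).
    destruct Hs; subst s.
    + assert (a < - (3/2)) by nra.
      assert (Hc2 : -/2 < c < /2) by nra.
      split; intro Hre.
      * apply arg_pos.
        -- unfold Rdiv. nra.
        -- apply Rabs_le. unfold Rdiv. split; nra.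
      * exfalso. unfold Rdiv in Hre. nra.
    + assert (a > 3/2) by nra.
      assert (Hc2 : -/2 < c < /2) by nra.
      split; intro Hre.
      * exfalso. unfold Rdiv in Hre. nra.
      * apply arg_neg.
        -- unfold Rdiv. nra.
        -- apply Rabs_le. unfold Rdiv. split; nra.
Qed.

Theorem lemma6p4 (n : nat) (b : nat -> nat) (eps : nat -> R) :
  (1 <= n)%nat ->
  (forall j, (1 <= j <= n)%nat -> (2 <= b j)%nat) ->
  (forall j, (1 <= j <= n)%nat -> eps j = 1 \/ eps j = -1) ->
  forall z : C, in_Fn b eps n z ->
  forall k : nat, (k <= n - 1)%nat ->
    4/5 * / INR (b (S k)) <= Cmod (Giter k z) <= 4/3 * / INR (b (S k)) /\
    (0 < Re (Giter k z) -> arg_in (Giter k z) (- PI / 4) (PI / 4)) /\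
    (Re (Giter k z) < 0 -> arg_in (Giter k z) (3 * PI / 4) (5 * PI / 4)).
Proof.
  intros Hn Hb He z Hz k Hk.
  destruct (Hz k Hk) as [_ HD].
  assert (Hbk : (2 <= b (S k))%nat) by (apply Hb; lia).
  refine (key _ _ _ _ Hbk HD).
  unfold rsign. destruct (Rlt_dec _ _); auto.
Qed.
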